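(* For all integers $a, b \ge 2$, $R_\mathrm{cyc}(C_a^\mathrm{mon}, C_b^\mathrm{mon}) = 2ab - 3a - 3b + 6$.
   Context: All graphs are finite, simple and undirected, and a graph of order $n$ has vertex set $\{0,1,\ldots,n-1\}$; $K_n$ is the complete graph on $\{0,\ldots,n-1\}$. A $2$-edge-coloring of $K_n$ assigns each edge a color in $\{1,2\}$. An embedding of $H$ in color $j$ is an injective map $\varphi\colon V(H)\to V(K_n)$ such that every edge $uv$ of $H$ goes to an edge $\{\varphi(u),\varphi(v)\}$ of color $j$; it is increasing up to a cyclic permutation if there exists $t\in V(H)$ such that $(\varphi(t),\ldots,\varphi(|H|-1),\varphi(0),\ldots,\varphi(t-1))$ is increasing. $R_\mathrm{cyc}(H_1,H_2)$ is the smallest $n$ such that every $2$-edge-coloring of $K_n$ admits an embedding of $H_1$ in color $1$ or of $H_2$ in color $2$ that is increasing up to a cyclic permutation. For $n\ge3$ the monotone cycle $C_n^\mathrm{mon}$ has edges $\{i,i+1\}$ ($0\le i\le n-2$) and $\{0,n-1\}$; by convention $C_2^\mathrm{mon}=K_2$. *)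

(* Defs.v *)
(* Graphs of order h have vertex set {0,...,h-1} (as nat),
   given by an edge relation on nat; colorings of K_n are functions on
   pairs of vertices in {0,...,n-1}. *)
From mathcomp Require Import all_boot.
Set Implicit Arguments. Unset Strict Implicit. Unset Printing Implicit Defensive.

Definition two_coloring (n : nat) (c : nat -> nat -> nat) : Prop :=
  forall i j, i < n -> j < n -> i != j ->
    c i j = c j i /\ (c i j = 1 \/ c i j = 2).

(* phi : V(H) -> V(K_n) is an embedding of H (order h, edges e) in color j
   that is increasing up to a cyclic permutation. *)
Definition cyc_embedding (h : nat) (e : rel nat) (n : nat)
    (c : nat -> nat -> nat) (j : nat) (phi : nat -> nat) : Prop :=
  [/\ (forall u, u < h -> phi u < n),
      {in [pred u | u < h] &, injective phi},
      (forall u v, u < h -> v < h -> e u v -> c (phi u) (phi v) = j)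
    & exists2 t, t < h & sorted ltn (map phi (rot t (iota 0 h)))].

Definition cyc_arrows (n h1 : nat) (e1 : rel nat) (h2 : nat) (e2 : rel nat)
  : Prop :=
  forall c, two_coloring n c ->
    (exists phi, cyc_embedding h1 e1 n c 1 phi) \/
    (exists phi, cyc_embedding h2 e2 n c 2 phi).

Definition is_Rcyc (h1 : nat) (e1 : rel nat) (h2 : nat) (e2 : rel nat)
    (N : nat) : Prop :=
  cyc_arrows N h1 e1 h2 e2 /\ (forall m, cyc_arrows m h1 e1 h2 e2 -> N <= m).

(* Edges of the monotone cycle C_a^mon on {0,...,a-1}: {i,i+1} for
   0 <= i <= a-2 and {0,a-1}; for a = 2 this is K_2. *)
Definition mon_cycle (a : nat) : rel nat :=
  fun u v => [&& u < a, v < a, u != v &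
     [|| u.+1 == v, v.+1 == u,
         (u == 0) && (v == a.-1) | (v == 0) && (u == a.-1)]].

(* Main.v *)
Require Import Defs.
From mathcomp Require Import all_boot zify.
From Stdlib Require Import Classical.
Set Implicit Arguments. Unset Strict Implicit. Unset Printing Implicit Defensive.

Definition jr (c : nat -> nat -> nat) (j : nat) : rel nat :=
  fun u v => (u < v) && (c u v == j).

Definition poly (c : nat -> nat -> nat) (j k n : nat) : Prop :=
  exists x s, [/\ size s = k.-1, all (fun v => v < n) (x :: s),
                  path (jr c j) x s & c x (last x s) = j].

Lemma iota_path h k r : k + r < h -> path (mon_cycle h) k (iota k.+1 r).
Proof.
elim: r k => [|r IH] k H //=.
rewrite IH; last by lia.
rewrite andbT /mon_cycle. apply/and4P; split; try (apply/ltP; lia).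
- by rewrite neq_ltn ltnSn.
- by rewrite eqxx.
Qed.

Lemma last_iota t r : last t (iota t.+1 r) = t + r.
Proof. elim: r t => [|r IH] t /=; first by rewrite addn0. by rewrite IH addnS. Qed.

Lemma rot_iota t h : t < h -> rot t (iota 0 h) = t :: (iota t.+1 (h - t.+1) ++ iota 0 t).
Proof.
move=> th; rewrite /rot drop_iota take_iota add0n.
have -> : minn t h = t by lia.
have -> : h - t = (h - t.+1).+1 by lia.
by [].
Qed.

Lemma emb_poly h n c j phi : 2 <= h -> cyc_embedding h (mon_cycle h) n c j phi -> poly c j h n.
Proof.
move=> h2 [Hr Hinj He [t th Hs]].
rewrite rot_iota // in Hs.
set l := iota t.+1 (h - t.+1) ++ iota 0 t in Hs.
have Hl : all (fun v => v < h) (t :: l).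
  apply/allP => v; rewrite /l inE mem_cat !mem_iota; lia.
have Hmc : path (mon_cycle h) t l.
  rewrite /l cat_path iota_path; last by lia.
  rewrite last_iota.
  case: t th {Hs Hl l} => [|t] th //=.
  rewrite iota_path; last by lia.
  rewrite andbT /mon_cycle. apply/and4P; split; try (apply/ltP; lia).
  - apply/eqP; lia.
  - apply/orP; right; apply/orP; right; apply/orP; right.
    apply/andP; split; apply/eqP; lia.
have mcE u v : mon_cycle h u v -> c (phi u) (phi v) = j.
  move=> H; apply: He => //; by case/and4P: H.
exists (phi t), (map phi l); split.
- rewrite size_map /l size_cat !size_iota; lia.
- rewrite /= all_map; apply/andP; split; first by apply: Hr.
  apply/allP => v vl; apply: Hr. by move/allP: Hl; apply; rewrite inE vl orbT.
- rewrite path_map.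
  have Hs' : path (relpre phi ltn) t l by rewrite -path_map.
  have : path [rel u v | relpre phi ltn u v && mon_cycle h u v] t l by rewrite path_relI Hs' Hmc.
  apply: sub_path => u v /andP [H1 H2] /=. rewrite /jr (mcE _ _ H2) eqxx andbT. exact: H1.
- rewrite last_map; apply: mcE.
  have Hlast : last t l = if t == 0 then h.-1 else t.-1.
    rewrite /l last_cat last_iota.
    case: t th {Hs Hl Hmc l} => [|t] th /=; first by lia.
    rewrite last_iota; lia.
  rewrite Hlast /mon_cycle.
  case: t th {Hs Hl Hmc l Hlast} => [|t] th /=.
  + apply/and4P; split; try (apply/ltP; lia). apply/eqP; lia.
    by rewrite eqxx !orbT.
  + apply/and4P; split; try (apply/ltP; lia). apply/eqP; lia.
    by rewrite eqxx !orbT.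
Qed.

Lemma poly_emb k n c j : 2 <= k -> two_coloring n c -> poly c j k n ->
  exists phi, cyc_embedding k (mon_cycle k) n c j phi.
Proof.
move=> k2 Hc [x [s [Hsz Hall Hp Hcl]]].
have Hsz' : size (x :: s) = k by rewrite /= Hsz; lia.
have Hsort : sorted ltn (x :: s).
  by apply: (sub_path _ Hp) => u v /andP [].
have Hu : uniq (x :: s) by apply: (sorted_uniq ltn_trans ltnn).
exists (nth 0 (x :: s)); split.
- move=> u uk; apply: (allP Hall); apply: mem_nth; by rewrite Hsz'.
- move=> u v; rewrite !inE => uk vk /eqP.
  rewrite nth_uniq ?Hsz' //; by move/eqP.
- have Hlt u : u < k -> nth 0 (x :: s) u < n.
    move=> uk; apply: (allP Hall); apply: mem_nth; by rewrite Hsz'.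
  have Hne u v : u < k -> v < k -> u != v -> nth 0 (x :: s) u != nth 0 (x :: s) v.
    by move=> uk vk; rewrite nth_uniq ?Hsz'.
  have Hsucc u : u.+1 < k -> c (nth 0 (x :: s) u) (nth 0 (x :: s) u.+1) = j.
    move=> uk; move/(pathP 0): Hp => /(_ u) H.
    have /H /andP [_ /eqP] : u < size s by lia.
    done.
  have Hend : c (nth 0 (x :: s) 0) (nth 0 (x :: s) k.-1) = j.
    have -> : k.-1 = (size (x :: s)).-1 by rewrite Hsz'.
    by rewrite nth_last.
  move=> u v uk vk /and4P [_ _ uv /or4P [/eqP E|/eqP E|/andP [/eqP E1 /eqP E2]|/andP [/eqP E1 /eqP E2]]].
  + by rewrite -E Hsucc // E.
  + have uv' : u != v by apply/eqP; lia.
    have [-> _] := Hc _ _ (Hlt _ uk) (Hlt _ vk) (Hne _ _ uk vk uv').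
    by rewrite -E Hsucc // E.
  + by rewrite E1 E2.
  + have uv' : u != v by apply/eqP; lia.
    have [-> _] := Hc _ _ (Hlt _ uk) (Hlt _ vk) (Hne _ _ uk vk uv').
    by rewrite E1 E2.
- exists 0 => //; first lia.
  by rewrite rot0 -Hsz' -/(mkseq _ _) mkseq_nth.
Qed.

Lemma count_split (P Q R : pred nat) s : (forall v, P v -> Q v || R v) ->
  count P s <= count Q s + count R s.
Proof.
move=> H; elim: s => //= x s IH.
have := H x; case: (P x); case: (Q x); case: (R x) => //= H'; try lia.
all: by have := H' isT.
Qed.

Lemma es n c j j' m' k (P : pred nat) :
  (forall u v, u < v -> P u -> P v -> c u v = j \/ c u v = j') ->
  (forall x s, all P (x :: s) -> size s = k -> path (jr c j) x s -> False) ->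
  (forall x s, all P (x :: s) -> size s = m' -> pairwise (jr c j') (x :: s) -> False) ->
  count P (iota 0 n) <= k * m'.
Proof.
elim: k P => [|k IH] P H1 H2 H3.
  rewrite (eq_in_count (a2 := pred0)); first by rewrite count_pred0.
  move=> v _ /=; apply/negbTE/negP => Pv.
  by apply: (H2 v [::]); rewrite /= ?Pv.
pose T := fun v => P v && ~~ has (fun u => P u && (c u v == j)) (iota 0 v).
pose P' := fun v => P v && has (fun u => P u && (c u v == j)) (iota 0 v).
have HT : count T (iota 0 n) <= m'.
  rewrite leqNgt; apply/negP => Hlt.
  set L := filter T (iota 0 n).
  have HL : size L = count T (iota 0 n) by rewrite size_filter.
  case EL: L HL => [|x s] HL; first by rewrite -HL in Hlt.
  have Hsort : sorted ltn L by apply: sorted_filter; [exact: ltn_trans | exact: iota_ltn_sorted].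
  have HallT : all T L by apply: filter_all.
  have Hpw : pairwise (jr c j') L.
    rewrite (sorted_pairwise ltn_trans) in Hsort.
    apply: (sub_in_pairwise _ HallT Hsort) => u v Tu Tv uv.
    rewrite /jr uv /=.
    have [Pv Hv] : P v /\ ~~ has (fun u => P u && (c u v == j)) (iota 0 v).
      by move: Tv; rewrite /T unfold_in /= => /andP [].
    have Pu : P u by move: Tu; rewrite /T unfold_in /= => /andP [].
    case: (H1 u v uv Pu Pv) => [E|->]; last by [].
    exfalso; move/negP: Hv; apply; apply/hasP; exists u; first by rewrite mem_iota.
    by rewrite Pu E eqxx.
  apply: (H3 x (take m' s)).
  - have : all P L by apply: sub_all HallT => v /andP [].
    rewrite EL /= => /andP [-> Hs] /=.
    apply/allP => v /mem_take vs; exact: (allP Hs).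
  - rewrite size_take; simpl in HL; case: ifP => //; move/negbT; lia.
  - apply: (subseq_pairwise _ (Hpw)); rewrite EL /=.
    by rewrite eqxx take_subseq.
have HP' : count P' (iota 0 n) <= k * m'.
  apply: IH.
  - move=> u v uv /andP [Pu _] /andP [Pv _]; exact: H1.
  - move=> x s /= /andP [/andP [Px Hx] Hs] Hsz Hp.
    move/hasP: Hx => [u]; rewrite mem_iota => /andP [_ ux] /andP [Pu /eqP cu].
    apply: (H2 u (x :: s)).
    + rewrite /= Pu Px /=; by apply: sub_all Hs => v /andP [].
    + by rewrite /= Hsz.
    + rewrite /= /jr cu eqxx andbT Hp andbT; apply/ltP; lia.
  - move=> x s Hall Hsz Hp; apply: (H3 x s) => //.
    by apply: sub_all Hall => v /andP [].
have : count P (iota 0 n) <= count T (iota 0 n) + count P' (iota 0 n).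
  apply: count_split => v Pv; rewrite /T /P' Pv /=.
  by case: has.
lia.
Qed.

Lemma clique_poly c j m n x s : pairwise (jr c j) (x :: s) -> size s = m.-1 -> 0 < size s ->
  all (fun v => v < n) (x :: s) -> poly c j m n.
Proof.
move=> Hp Hsz Hs Hall; exists x, s; split => //.
- by have := pairwise_sorted Hp.
- case: s Hp Hsz Hs Hall => [|y s] //= /andP [/andP [Hxy Hy0] _] _ _ _.
  have Hy : all (jr c j x) (y :: s) by rewrite /= Hxy Hy0.
  have Hm : last y s \in y :: s by apply: mem_last.
  by have /andP [_ /eqP] := allP Hy _ Hm.
Qed.

Lemma count_mid N : count (fun v => (0 < v) && (v < N)) (iota 0 N) = N.-1.
Proof.
case: N => [|N] //=.
rewrite (eq_in_count (a2 := predT)); first by rewrite count_predT size_iota.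
move=> v; rewrite mem_iota => /andP [H1 H2] /=; apply/andP; split; lia.
Qed.

Lemma upper a b c : 2 <= a -> 2 <= b -> two_coloring (2 * a * b + 6 - 3 * a - 3 * b) c ->
  poly c 1 a (2 * a * b + 6 - 3 * a - 3 * b) \/ poly c 2 b (2 * a * b + 6 - 3 * a - 3 * b).
Proof.
set N := 2 * a * b + 6 - 3 * a - 3 * b => a2 b2 Hc.
have N2 : 2 <= N by rewrite /N; nia.
case: (classic (poly c 1 a N)) => [H|Hn1]; first by left.
case: (classic (poly c 2 b N)) => [H|Hn2]; first by right.
exfalso.
have Hcol u v : u < v -> v < N -> c u v = 1 \/ c u v = 2.
  move=> uv vN; have [_ ] := Hc u v (ltn_trans uv vN) vN (negbT (ltn_eqF uv)); done.
have HX : count (fun v => (0 < v) && (v < N) && (c 0 v == 1)) (iota 0 N) <= (a - 2) * (b - 1).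
  apply: (@es N c 1 2).
  - move=> u v uv _ /= /andP [/andP [_ vN] _]; exact: Hcol.
  - move=> x s Hall Hsz Hp; apply: Hn1; exists 0, (x :: s); split.
    + rewrite /= Hsz; lia.
    + apply/andP; split; first by apply: ltn_trans N2.
      by apply: sub_all Hall => v /andP [/andP [_ ->]].
    + rewrite /= Hp andbT /jr.
      by move: Hall => /= /andP [/andP [/andP [-> _] ->] _].
    + have Hm : last x s \in x :: s by apply: mem_last.
      by have /andP [_ /eqP] := allP Hall _ Hm.
  - move=> x s Hall Hsz Hp; apply: Hn2; apply: (clique_poly Hp).
    + rewrite Hsz; lia.
    + rewrite Hsz; lia.
    + by apply: sub_all Hall => v /andP [/andP [_ ->]].
have HY : count (fun v => (0 < v) && (v < N) && (c 0 v == 2)) (iota 0 N) <= (b - 2) * (a - 1).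
  apply: (@es N c 2 1).
  - move=> u v uv _ /= /andP [/andP [_ vN] _].
    by case: (Hcol u v uv vN); [right|left].
  - move=> x s Hall Hsz Hp; apply: Hn2; exists 0, (x :: s); split.
    + rewrite /= Hsz; lia.
    + apply/andP; split; first by apply: ltn_trans N2.
      by apply: sub_all Hall => v /andP [/andP [_ ->]].
    + rewrite /= Hp andbT /jr.
      by move: Hall => /= /andP [/andP [/andP [-> _] ->] _].
    + have Hm : last x s \in x :: s by apply: mem_last.
      by have /andP [_ /eqP] := allP Hall _ Hm.
  - move=> x s Hall Hsz Hp; apply: Hn1; apply: (clique_poly Hp).
    + rewrite Hsz; lia.
    + rewrite Hsz; lia.
    + by apply: sub_all Hall => v /andP [/andP [_ ->]].
have Hsplit : count (fun v => (0 < v) && (v < N)) (iota 0 N) <= count (fun v => (0 < v) && (v < N) && (c 0 v == 1)) (iota 0 N) + count (fun v => (0 < v) && (v < N) && (c 0 v == 2)) (iota 0 N).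
  apply: count_split => v /andP [v0 vN]; rewrite /= v0 vN /=.
  by case: (Hcol 0 v v0 vN) => ->.
rewrite count_mid in Hsplit.
move: N2 Hsplit HX HY; rewrite /N; nia.
Qed.

Lemma pot_strict (r : rel nat) (Z : pred nat) (f : nat -> nat) x s :
  all Z (x :: s) -> (forall u v, Z u -> Z v -> r u v -> f u < f v) ->
  path r x s -> f x + size s <= f (last x s).
Proof.
move=> + H; elim: s x => [|y s IH] x /=; first by rewrite addn0.
move=> /and3P [Zx Zy Zs] /andP [rxy Hp].
have := IH y; rewrite /= Zy Zs => /(_ isT Hp).
have := H x y Zx Zy rxy; lia.
Qed.

Lemma pot_mono (r : rel nat) (Z : pred nat) (f : nat -> nat) x s :
  all Z (x :: s) -> (forall u v, Z u -> Z v -> r u v -> f u <= f v) ->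
  path r x s -> f x <= f (last x s).
Proof.
move=> + H; elim: s x => [|y s IH] x //=.
move=> /and3P [Zx Zy Zs] /andP [rxy Hp].
have := IH y; rewrite /= Zy Zs => /(_ isT Hp).
have := H x y Zx Zy rxy; lia.
Qed.

Lemma pot_anti (r : rel nat) (Z : pred nat) (f : nat -> nat) x s :
  all Z (x :: s) -> (forall u v, Z u -> Z v -> r u v -> f v <= f u) ->
  path r x s -> f (last x s) <= f x.
Proof.
move=> + H; elim: s x => [|y s IH] x //=.
move=> /and3P [Zx Zy Zs] /andP [rxy Hp].
have := IH y; rewrite /= Zy Zs => /(_ isT Hp).
have := H x y Zx Zy rxy; lia.
Qed.

Lemma split_at (B : nat) x s : path ltn x s -> x < B -> B <= last x s ->
  exists p y q, [/\ s = p ++ y :: q, all (fun v => v < B) (x :: p) & all (fun v => B <= v) (y :: q)].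
Proof.
elim: s x => [|z s IH] x /=; first by lia.
move=> /andP [xz Hp] xB Hl.
case: (ltnP z B) => zB.
  have [p [y [q [E H1 H2]]]] := IH z Hp zB Hl.
  exists (z :: p), y, q; split; first by rewrite E.
  - by rewrite /= xB.
  - done.
exists [::], z, s; split => //=; first by rewrite xB.
rewrite zB /=; apply/allP => v vs.
have := order_path_min ltn_trans Hp => /allP /(_ v vs); lia.
Qed.

Lemma lex d g1 l1 g2 l2 : l1 < d -> l2 < d -> g1 * d + l1 < g2 * d + l2 ->
  g1 < g2 \/ (g1 = g2 /\ l1 < l2).
Proof. move=> H1 H2 H3. case: (ltngtP g1 g2) => H; [by left | nia | right; split => //; subst; lia]. Qed.

Definition Bx (a b : nat) := 1 + (b - 1) * (a - 2).
Definition Mx (a b : nat) := Bx a b + (b - 2) * (a - 1).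
Definition gx (a v : nat) := (v - 1) %/ (a - 2).
Definition lx (a v : nat) := (v - 1) %% (a - 2).
Definition my (a b v : nat) := (v - Bx a b) %/ (a - 1).
Definition hy (a b v : nat) := (v - Bx a b) %% (a - 1).

Definition col (a b u v : nat) : nat :=
  if u == 0 then (if v < Bx a b then 1 else 2)
  else if v < Bx a b then (if lx a u < lx a v then 1 else 2)
  else if u < Bx a b then (if (my a b v < gx a u) != (hy a b v <= lx a u) then 1 else 2)
  else (if hy a b u < hy a b v then 1 else 2).

Definition C (a b i j : nat) : nat := if i < j then col a b i j else col a b j i.

Lemma FX a b v : 0 < v < Bx a b ->
  [/\ lx a v < a - 2, gx a v < b - 1 & v - 1 = gx a v * (a - 2) + lx a v].
Proof.
rewrite /Bx /lx /gx => /andP [H1 H2].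
have d0 : 0 < a - 2 by nia.
split; first exact: ltn_pmod.
- rewrite ltn_divLR //; nia.
- exact: divn_eq.
Qed.

Lemma FY a b v : Bx a b <= v < Mx a b -> 2 <= a ->
  [/\ hy a b v < a - 1, my a b v < b - 2 & v - Bx a b = my a b v * (a - 1) + hy a b v].
Proof.
rewrite /Mx /hy /my => /andP [H1 H2] a2.
have d0 : 0 < a - 1 by lia.
split; first exact: ltn_pmod.
- rewrite ltn_divLR //; move: H1 H2; set K := (b - 2) * (a - 1); set B := Bx a b; lia.
- exact: divn_eq.
Qed.

Lemma XX a b u v : 0 < u -> u < v -> v < Bx a b ->
  gx a u < gx a v \/ (gx a u = gx a v /\ lx a u < lx a v).
Proof.
move=> u0 uv vB.
have [l1 _ e1] := FX (v:=u) (a:=a) (b:=b) (ltac:(apply/andP; split; lia)).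
have [l2 _ e2] := FX (v:=v) (a:=a) (b:=b) (ltac:(apply/andP; split; lia)).
apply: (lex l1 l2); lia.
Qed.

Lemma YY a b u v : 2 <= a -> Bx a b <= u -> u < v -> v < Mx a b ->
  my a b u < my a b v \/ (my a b u = my a b v /\ hy a b u < hy a b v).
Proof.
move=> a2 uB uv vM.
have [l1 _ e1] := FY (a:=a) (b:=b) (v:=u) (ltac:(apply/andP; split; lia)) a2.
have [l2 _ e2] := FY (a:=a) (b:=b) (v:=v) (ltac:(apply/andP; split; lia)) a2.
apply: (lex l1 l2); lia.
Qed.

Lemma C_lt a b u v : u < v -> C a b u v = col a b u v.
Proof. by rewrite /C => ->. Qed.

Lemma C_sym a b u v : u != v -> C a b u v = C a b v u.
Proof. rewrite /C neq_ltn => /orP [] H; rewrite H; [rewrite ltnNge ltnW // | rewrite ltnNge ltnW //]. Qed.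

Lemma C_12 a b u v : C a b u v = 1 \/ C a b u v = 2.
Proof. rewrite /C /col; repeat case: ifP => _; auto. Qed.

Lemma B1 a b : 0 < Bx a b. Proof. by rewrite /Bx. Qed.

Lemma col0 a b v : col a b 0 v = if v < Bx a b then 1 else 2.
Proof. by rewrite /col eqxx. Qed.
Lemma colXX a b u v : 0 < u -> v < Bx a b -> col a b u v = if lx a u < lx a v then 1 else 2.
Proof. rewrite /col => u0 vB; rewrite vB; case: eqP => //; lia. Qed.
Lemma colXY a b u v : 0 < u -> u < Bx a b -> Bx a b <= v ->
  col a b u v = if (my a b v < gx a u) != (hy a b v <= lx a u) then 1 else 2.
Proof. rewrite /col => u0 uB vB; rewrite uB ltnNge vB /=; case: eqP => //; lia. Qed.
Lemma colYY a b u v : Bx a b <= u -> Bx a b <= v -> col a b u v = if hy a b u < hy a b v then 1 else 2.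
Proof.
rewrite /col => uB vB; have := B1 a b => B0.
have -> : (u == 0) = false by apply/eqP; lia.
have -> : (v < Bx a b) = false by apply/negbTE; rewrite -leqNgt.
have -> : (u < Bx a b) = false by apply/negbTE; rewrite -leqNgt.
done.
Qed.

Lemma last_gt x s : path ltn x s -> s != [::] -> x < last x s.
Proof.
case: s => [|z s] //= /andP [xz Hp] _.
have := order_path_min ltn_trans Hp => /allP H.
have : last z s \in z :: s by apply: mem_last.
rewrite inE => /orP [/eqP -> //|/H]; lia.
Qed.

Lemma path_ge x s : path ltn x s -> all (fun v => x <= v) (x :: s).
Proof.
move=> Hp; rewrite /= leqnn /=.
have := order_path_min ltn_trans Hp; apply: sub_all => v /=; lia.
Qed.

Lemma gx_mono a b u v : 0 < u -> u < v -> v < Bx a b -> gx a u <= gx a v.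
Proof. move=> u0 uv vB; case: (XX (a:=a) (b:=b) u0 uv vB) => [|[]]; lia. Qed.
Lemma gx_red a b u v : 0 < u -> u < v -> v < Bx a b -> lx a v <= lx a u -> gx a u < gx a v.
Proof. move=> u0 uv vB H; case: (XX (a:=a) (b:=b) u0 uv vB) => [|[]]; lia. Qed.
Lemma my_mono a b u v : 2 <= a -> Bx a b <= u -> u < v -> v < Mx a b -> my a b u <= my a b v.
Proof. move=> a2 uB uv vM; case: (YY a2 uB uv vM) => [|[]]; lia. Qed.
Lemma my_red a b u v : 2 <= a -> Bx a b <= u -> u < v -> v < Mx a b -> hy a b v <= hy a b u -> my a b u < my a b v.
Proof. move=> a2 uB uv vM H; case: (YY a2 uB uv vM) => [|[]]; lia. Qed.

Lemma no_blue a b x s : 2 <= a -> 2 <= b -> size s = a.-1 ->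
  all (fun v => v < Mx a b) (x :: s) -> path (jr (C a b) 1) x s ->
  C a b x (last x s) = 1 -> False.
Proof.
move=> a2 b2 Hsz Hall Hp Hcl.
set B := Bx a b in Hall *; set M := Mx a b in Hall *.
have Hlt : path ltn x s by apply: (sub_path _ Hp) => u v /andP [].
have sne : s != [::] by case: s Hsz {Hall Hp Hcl Hlt} => [|z s0] //= H; exfalso; lia.
set y := last x s in Hcl *.
have xy : x < y by apply: last_gt.
have yM : y < M by apply: (allP Hall); rewrite /y mem_last.
pose Phi v := if v == 0 then 0 else if v < B then lx a v + 1 else hy a b v + a - 1.
have HPhi : Phi x + size s <= Phi y.
  apply: (pot_strict (Z := fun v => v < M)) Hall _ Hp.
  move=> u v uM vM /andP [uv /eqP]; rewrite C_lt // /Phi => Hc.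
  have vn0 : (v == 0) = false by apply/eqP; lia.
  rewrite vn0.
  case: (posnP u) => [u0|u0].
    subst u; move: Hc; rewrite col0 /=; case: (ltnP v B) => vB //= _; lia.
  case: (ltnP v B) => vB.
    rewrite (ltn_trans uv vB); move: Hc; rewrite colXX //; case: ifP => //; lia.
  case: (ltnP u B) => uB.
    have [l1 _ _] := FX (a:=a) (b:=b) (v:=u) (ltac:(apply/andP; split; lia)); lia.
  move: Hc; rewrite colYY //; case: ifP => //; lia.
have sz : size s = a - 1 by lia.
have yn0 : (y == 0) = false by apply/eqP; lia.
have yFY : B <= y -> hy a b y < a - 1 /\ my a b y < b - 2.
  move=> yB; have [h1 h2 _] := FY (a:=a) (b:=b) (v:=y) (ltac:(apply/andP; split; lia)) a2; lia.
move: HPhi Hcl; rewrite /Phi C_lt // yn0.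
case: (posnP x) => [x0|x0].
  subst x; rewrite col0 /=; case: (ltnP y B) => yB //= HPhi _.
  have [l1 _ _] := FX (a:=a) (b:=b) (v:=y) (ltac:(apply/andP; split; lia)); lia.
case: (ltnP y B) => yB.
  have xB : x < B by lia.
  rewrite xB colXX //; case: ifP => // _ HPhi _.
  have [l1 _ _] := FX (a:=a) (b:=b) (v:=y) (ltac:(apply/andP; split; lia)); lia.
case: (ltnP x B) => xB; last first.
  rewrite colYY //; case: ifP => // _ HPhi _; have := yFY yB; lia.
move=> HPhi; rewrite colXY //.
have Hhl : lx a x < hy a b y by lia.
have -> : (hy a b y <= lx a x) = false by apply/negbTE; rewrite -ltnNge.
case: (ltnP (my a b y) (gx a x)) => // Hmy _.
have [p [y1 [q [Es Hxp Hyq]]]] := split_at Hlt xB yB.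
move: Hp; rewrite Es cat_path /= => /andP [Hpp /andP [Htr Hpq]].
have ly : last y1 q = y by rewrite /y Es last_cat.
have Hge := path_ge Hlt; rewrite Es /= all_cat /= in Hge.
move: Hge => /andP [_ /andP [Hgep /andP [Hgey1 Hgeq]]].
move: Hall; rewrite Es /= all_cat /= => /andP [_ /andP [HMp /andP [HMy1 HMq]]].
pose ZX := fun v => (x <= v) && (v < B).
pose ZY := fun v => (B <= v) && (v < M).
have HallX : all ZX (x :: p).
  rewrite /= /ZX leqnn xB /=; apply/allP => v vp; apply/andP; split.
  - exact: (allP Hgep).
  - by move: Hxp => /= /andP [_ /allP]; apply.
have HallY : all ZY (y1 :: q).
  apply/allP => v; rewrite inE => /orP [/eqP ->|vq]; apply/andP; split.
  - by move: Hyq => /= /andP [].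
  - done.
  - by move: Hyq => /= /andP [_ /allP]; apply.
  - exact: (allP HMq).
have G1 : gx a x <= gx a (last x p).
  apply: (pot_mono (Z := ZX)) HallX _ Hpp.
  move=> u v /andP [xu uB] /andP [xv vB] /andP [uv _].
  apply: (gx_mono (b:=b)) uv vB; exact: leq_trans x0 xu.
have L1 : lx a x + size p <= lx a (last x p).
  apply: (pot_strict (Z := ZX)) HallX _ Hpp.
  move=> u v /andP [xu uB] /andP [xv vB] /andP [uv /eqP].
  rewrite C_lt // colXX //; last exact: leq_trans x0 xu.
  by case: ifP.
have M1 : my a b y1 <= my a b y.
  rewrite -ly; apply: (pot_mono (Z := ZY)) HallY _ Hpq.
  move=> u v /andP [uB uM] /andP [vB vM] /andP [uv _].
  exact: (my_mono a2 uB uv vM).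
have H1 : hy a b y1 + size q <= hy a b y.
  rewrite -ly; apply: (pot_strict (Z := ZY)) HallY _ Hpq.
  move=> u v /andP [uB uM] /andP [vB vM] /andP [uv /eqP].
  rewrite C_lt // colYY //.
  by case: ifP.
set xs := last x p in G1 L1 Htr.
have xsX : ZX xs by apply: (allP HallX); rewrite /xs mem_last.
move: xsX => /andP [xxs xsB].
have y1B : B <= y1 by move: Hyq => /= /andP [].
move: Htr => /andP [xsy1 /eqP]; rewrite C_lt // colXY //; last exact: leq_trans x0 xxs.
have -> : (my a b y1 < gx a xs) = true.
  apply: (leq_ltn_trans M1); exact: leq_trans Hmy G1.
case: leqP => // Hl _.
move: sz; rewrite Es size_cat /= => sz.
have [h1 _] := yFY yB.
clear -sz L1 H1 Hl h1; lia.
Qed.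

Lemma no_red a b x s : 2 <= a -> 2 <= b -> size s = b.-1 ->
  all (fun v => v < Mx a b) (x :: s) -> path (jr (C a b) 2) x s ->
  C a b x (last x s) = 2 -> False.
Proof.
move=> a2 b2 Hsz Hall Hp Hcl.
set B := Bx a b in Hall *; set M := Mx a b in Hall *.
have Hlt : path ltn x s by apply: (sub_path _ Hp) => u v /andP [].
have sne : s != [::] by case: s Hsz {Hall Hp Hcl Hlt} => [|z s0] //= H; exfalso; lia.
set y := last x s in Hcl *.
have xy : x < y by apply: last_gt.
have yM : y < M by apply: (allP Hall); rewrite /y mem_last.
have sz : size s = b - 1 by lia.
have yn0 : (y == 0) = false by apply/eqP; lia.
have yFY : B <= y -> hy a b y < a - 1 /\ my a b y < b - 2.
  move=> yB; have [h1 h2 _] := FY (a:=a) (b:=b) (v:=y) (ltac:(apply/andP; split; lia)) a2; lia.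
have Hge := path_ge Hlt.
have redY u v : B <= u -> u < v -> v < M -> C a b u v = 2 -> my a b u < my a b v /\ hy a b v <= hy a b u.
  move=> uB uv vM; rewrite C_lt // colYY //; last by apply: leq_trans uB (ltnW uv).
  case: ltnP => // H _; split => //; exact: my_red a2 uB uv vM H.
have redX u v : 0 < u -> u < v -> v < B -> C a b u v = 2 -> gx a u < gx a v /\ lx a v <= lx a u.
  move=> u0 uv vB; rewrite C_lt // colXX //.
  case: ltnP => // H _; split => //; exact: gx_red u0 uv vB H.
pose Rho v := if v == 0 then 0 else if v < B then gx a v else my a b v + b - 1.
have HRho : Rho x + size s <= Rho y.
  apply: (pot_strict (Z := fun v => v < M)) Hall _ Hp.
  move=> u v uM vM /andP [uv /eqP] Hc; rewrite /Rho.
  have vn0 : (v == 0) = false by apply/eqP; lia.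
  rewrite vn0.
  case: (posnP u) => [u0|u0].
    subst u; move: Hc; rewrite C_lt // col0 /=; case: (ltnP v B) => vB //= _; lia.
  case: (ltnP v B) => vB.
    rewrite (ltn_trans uv vB); by case: (redX u v u0 uv vB Hc).
  case: (ltnP u B) => uB.
    have [_ g1 _] := FX (a:=a) (b:=b) (v:=u) (ltac:(apply/andP; split; lia)); lia.
  have [H _] := redY u v uB uv vM Hc; lia.
move: HRho Hcl; rewrite /Rho yn0.
case: (posnP x) => [x0|x0].
  subst x; rewrite C_lt // col0 /=; case: (ltnP y B) => yB //= HRho _.
  case Es: s sne => [|y1 q] // _.
  have ly : last y1 q = y by rewrite /y Es.
  move: Hp; rewrite Es /= => /andP [/andP [y10 /eqP Hc1] Hpq].
  have y1B : B <= y1 by move: Hc1; rewrite C_lt // col0; case: ltnP.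
  move: Hall Hlt sz; rewrite Es => Hall Hlt sz.
  pose ZY := fun v => (B <= v) && (v < M).
  have HallY : all ZY (y1 :: q).
    have y1M : y1 < M by apply: (allP Hall); rewrite !inE eqxx orbT.
    have HMq : all (fun v => v < M) q by apply/allP => v vq; apply: (allP Hall); rewrite !inE vq !orbT.
    have Hlq : path ltn y1 q by move: Hlt => /= /andP [].
    rewrite /ZY /= y1B y1M /=; apply/allP => v vq; rewrite (allP HMq v vq) andbT.
    have := allP (order_path_min ltn_trans Hlq) v vq => /= H; exact: leq_trans y1B (ltnW H).
  have H1 : my a b y1 + size q <= my a b y.
    rewrite -ly; apply: (pot_strict (Z := ZY)) HallY _ Hpq.
    move=> u v /andP [uB uM] /andP [vB vM] /andP [uv /eqP] Hc.
    by case: (redY u v uB uv vM Hc).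
  have [_ h2] := yFY yB.
  simpl in sz; clear -sz H1 h2; lia.
case: (ltnP y B) => yB.
  have xB : x < B by apply: ltn_trans xy yB.
  rewrite xB C_lt // colXX //; case: ifP => // _ HRho _.
  have [_ g1 _] := FX (a:=a) (b:=b) (v:=y) (ltac:(apply/andP; split; [exact: ltn_trans x0 xy|exact: yB])).
  clear -HRho g1 sz b2; lia.
case: (ltnP x B) => xB; last first.
  rewrite C_lt // colYY //; case: ifP => // _ HRho _.
  have [_ h2] := yFY yB.
  clear -HRho h2 sz b2; lia.
move=> HRho; rewrite C_lt // colXY //.
have Hgm : gx a x <= my a b y by clear -HRho sz; lia.
have -> : (my a b y < gx a x) = false by apply/negbTE; rewrite -leqNgt.
case: leqP => // Hhl _.
have [p [y1 [q [Es Hxp Hyq]]]] := split_at Hlt xB yB.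
move: Hp; rewrite Es cat_path /= => /andP [Hpp /andP [Htr Hpq]].
have ly : last y1 q = y by rewrite /y Es last_cat.
rewrite Es /= all_cat /= in Hge.
move: Hge => /andP [_ /andP [Hgep /andP [Hgey1 Hgeq]]].
move: Hall; rewrite Es /= all_cat /= => /andP [_ /andP [HMp /andP [HMy1 HMq]]].
pose ZX := fun v => (x <= v) && (v < B).
pose ZY := fun v => (B <= v) && (v < M).
have HallX : all ZX (x :: p).
  rewrite /= /ZX leqnn xB /=; apply/allP => v vp; apply/andP; split.
  - exact: (allP Hgep).
  - by move: Hxp => /= /andP [_ /allP]; apply.
have HallY : all ZY (y1 :: q).
  apply/allP => v; rewrite inE => /orP [/eqP ->|vq]; apply/andP; split.
  - by move: Hyq => /= /andP [].
  - done.
  - by move: Hyq => /= /andP [_ /allP]; apply.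
  - exact: (allP HMq).
have G1 : gx a x + size p <= gx a (last x p).
  apply: (pot_strict (Z := ZX)) HallX _ Hpp.
  move=> u v /andP [xu uB] /andP [xv vB] /andP [uv /eqP] Hc.
  by case: (redX u v (leq_trans x0 xu) uv vB Hc).
have L1 : lx a (last x p) <= lx a x.
  apply: (pot_anti (Z := ZX)) HallX _ Hpp.
  move=> u v /andP [xu uB] /andP [xv vB] /andP [uv /eqP] Hc.
  by case: (redX u v (leq_trans x0 xu) uv vB Hc).
have M1 : my a b y1 + size q <= my a b y.
  rewrite -ly; apply: (pot_strict (Z := ZY)) HallY _ Hpq.
  move=> u v /andP [uB uM] /andP [vB vM] /andP [uv /eqP] Hc.
  by case: (redY u v uB uv vM Hc).
have H1 : hy a b y <= hy a b y1.
  rewrite -ly; apply: (pot_anti (Z := ZY)) HallY _ Hpq.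
  move=> u v /andP [uB uM] /andP [vB vM] /andP [uv /eqP] Hc.
  by case: (redY u v uB uv vM Hc).
set xs := last x p in G1 L1 Htr.
have xsX : ZX xs by apply: (allP HallX); rewrite /xs mem_last.
move: xsX => /andP [xxs xsB].
have y1B : B <= y1 by move: Hyq => /= /andP [].
move: Htr => /andP [xsy1 /eqP]; rewrite C_lt // colXY //; last exact: leq_trans x0 xxs.
have -> : (hy a b y1 <= lx a xs) = false.
  apply/negbTE; rewrite -ltnNge; clear -L1 H1 Hhl; lia.
case: ltnP => // Hl _.
move: sz; rewrite Es size_cat /= => sz.
have [_ h2] := yFY yB.
clear -sz G1 M1 Hl h2; lia.
Qed.


Lemma Mx_eq a b : 2 <= a -> 2 <= b -> Mx a b = (2 * a * b + 6 - 3 * a - 3 * b).-1.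
Proof. move=> a2 b2; rewrite /Mx /Bx; nia. Qed.

Theorem corollary4p11 (a b : nat) :
  2 <= a -> 2 <= b ->
  is_Rcyc a (mon_cycle a) b (mon_cycle b) (2 * a * b + 6 - 3 * a - 3 * b).
Proof.
move=> a2 b2; split.
  move=> c Hc; case: (upper a2 b2 Hc) => H; [left|right]; exact: poly_emb.
move=> m Hm; rewrite leqNgt; apply/negP => Hlt.
have Hcm : two_coloring m (C a b).
  move=> i j _ _ ij; split; [exact: C_sym | exact: C_12].
have Hsub s : all (fun v => v < m) s -> all (fun v => v < Mx a b) s.
  apply: sub_all => v /= vm; rewrite Mx_eq //; lia.
case: (Hm (C a b) Hcm) => [[phi Hphi]|[phi Hphi]].
  have [x [s [Hsz Hall Hp Hcl]]] := emb_poly a2 Hphi.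
  exact: (no_blue a2 b2 Hsz (Hsub _ Hall) Hp Hcl).
have [x [s [Hsz Hall Hp Hcl]]] := emb_poly b2 Hphi.
exact: (no_red a2 b2 Hsz (Hsub _ Hall) Hp Hcl).
Qed.
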